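(* There is no finite group that has precisely two cyclic subgroups of order $6$. *)

(* Defs.v *)
From mathcomp Require Import all_boot all_fingroup all_solvable.
Set Implicit Arguments.
Unset Strict Implicit.
Unset Printing Implicit Defensive.

(* Main.v *)
Require Import Defs.
From mathcomp Require Import all_boot all_fingroup all_solvable.

Local Open Scope group_scope.
Section Aux.
Variable gT : finGroupType.
Implicit Types x y c a b h : gT.

Lemma ord6 x c : #[x] = 6 -> c \in <[x]> ->
  (#[c] = 2 -> c = x ^+ 3) /\ (#[c] = 3 -> c = x ^+ 2 \/ c = x ^+ 4).
Proof.
move=> ox /cyclePmin[k]; rewrite ox => lt ->; rewrite orderXgcd ox.
case: k lt => [|[|[|[|[|[|k]]]]]] //= _; split=> //; auto.
Qed.

Lemma ordP c p : c ^+ p = 1 -> c != 1 -> prime p -> #[c] = p.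
Proof.
move=> cp nc pr; have: #[c] %| p by rewrite order_dvdn cp.
case/primeP: pr => _ H /H /orP[/eqP o1|/eqP //].
by move: nc; rewrite -order_eq1 o1.
Qed.

Lemma gen_in x y : #[x] = 6 -> #[y] = 6 -> y ^+ 2 \in <[x]> -> y ^+ 3 \in <[x]> ->
  <[x]> = <[y]>.
Proof.
move=> ox oy y2 y3.
have yx : y \in <[x]>.
  have -> : y = y ^+ 3 * (y ^+ 2)^-1 by rewrite (expgS y 2) mulgK.
  by rewrite groupM ?groupV.
apply/eqP; rewrite eq_sym eqEcard cycle_subG yx /=.
by rewrite -!/(order _) ox oy.
Qed.

Lemma norm_step (G H1 H2 : {group gT}) x h :
  (forall C : {group gT}, C \subset G -> cyclic C -> #|C| = 6 -> C = H1 \/ C = H2) ->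
  H1 != H2 -> H1 \subset G -> H2 \subset G -> #|H1| = 6 -> H1 :=: <[x]> -> h \in H2 ->
  x ^ h \in <[x]>.
Proof.
move=> inS neq sH1 sH2 oH1 defH1 hH2.
have Gh : h \in G := subsetP sH2 _ hH2.
case: (inS (H1 :^ h)%G).
- by rewrite /= -(conjGid Gh) conjSg.
- by rewrite /= cyclicJ defH1 cycle_cyclic.
- by rewrite /= cardJg.
- move/(congr1 val) => /= E.
  by rewrite -defH1 -E memJ_conjg defH1 cycle_id.
- move/(congr1 val) => /= E.
  have : H1 :=: H2 by rewrite -(conjsgK h H1) E conjGid // groupV.
  by move=> E2; case/negP: neq; apply/eqP/val_inj.
Qed.
End Aux.
Arguments ord6 {gT x c}.
Arguments ordP {gT c p}.
Arguments gen_in {gT x y}.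

Theorem lemma3p1 (gT : finGroupType) (G : {group gT}) :
  #|[set H : {group gT} | [&& H \subset G, cyclic H & #|H| == 6]]| != 2.
Proof.
apply/negP => /cards2P [H1 [H2 [neq12 defS]]].
have inS : forall C : {group gT}, C \subset G -> cyclic C -> #|C| = 6 ->
    C = H1 \/ C = H2.
  move=> C sCG cC oC.
  have : C \in [set H : {group gT} | [&& H \subset G, cyclic H & #|H| == 6]].
    by rewrite inE sCG cC oC eqxx.
  by rewrite defS !inE => /orP[]/eqP; auto.
have : H1 \in [set H : {group gT} | [&& H \subset G, cyclic H & #|H| == 6]].
  by rewrite defS !inE eqxx.
rewrite inE => /and3P[sH1 cH1 /eqP oH1].
have : H2 \in [set H : {group gT} | [&& H \subset G, cyclic H & #|H| == 6]].
  by rewrite defS !inE eqxx orbT.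
rewrite inE => /and3P[sH2 cH2 /eqP oH2].
case/cyclicP: cH1 => x defH1; case/cyclicP: cH2 => y defH2.
have ox : #[x] = 6 by rewrite /order -defH1.
have oy : #[y] = 6 by rewrite /order -defH2.
have Gx : x \in G by rewrite (subsetP sH1) // defH1 cycle_id.
have Gy : y \in G by rewrite (subsetP sH2) // defH2 cycle_id.
have inS' : forall C : {group gT}, C \subset G -> cyclic C -> #|C| = 6 ->
    C = H2 \/ C = H1 by move=> C a b c; case: (inS C a b c); auto.
have neq21 : H2 != H1 by rewrite eq_sym.
have nx : forall h, h \in <[y]> -> x ^ h \in <[x]>.
  by move=> h; rewrite -defH2; apply: (norm_step _ _ _ _ _ _ inS neq12 sH1 sH2 oH1 defH1).
have ny : forall h, h \in <[x]> -> y ^ h \in <[y]>.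
  by move=> h; rewrite -defH1; apply: (norm_step _ _ _ _ _ _ inS' neq21 sH2 sH1 oH2 defH2).
have H12 : <[x]> <> <[y]>.
  by move=> E; case/negP: neq12; apply/eqP/val_inj; rewrite /= defH1 defH2.
have mk : forall a b, a \in G -> b \in G -> commute a b -> #[a] = 3 -> #[b] = 2 ->
    (a \in <[x]> /\ b \in <[x]>) \/ (a \in <[y]> /\ b \in <[y]>).
  move=> a b Ga Gb cab oa ob.
  have a3 : a ^+ 3 = 1 by rewrite -oa expg_order.
  have b2 : b ^+ 2 = 1 by rewrite -ob expg_order.
  have oab : #[a * b] = 6 by rewrite orderM // oa ob.
  have ain : a \in <[a * b]>.
    have E : (a * b) ^+ 4 = a by rewrite expgMn // (expgS a 3) a3 (expgD b 2 2) b2 !mulg1.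
    by rewrite -{1}E mem_cycle.
  have bin : b \in <[a * b]>.
    have E : (a * b) ^+ 3 = b by rewrite expgMn // a3 (expgS b 2) b2 mul1g mulg1.
    by rewrite -{1}E mem_cycle.
  case: (inS <[a * b]>%G).
  - by rewrite cycle_subG groupM.
  - exact: cycle_cyclic.
  - exact: oab.
  - by move/(congr1 val) => /= E; left; rewrite -defH1 -E.
  - by move/(congr1 val) => /= E; right; rewrite -defH2 -E.
have x2 : x ^+ 6 = 1 by rewrite -ox expg_order.
have y2 : y ^+ 6 = 1 by rewrite -oy expg_order.
have ox2 : #[x ^+ 2] = 3 by rewrite orderXgcd ox.
have ox3 : #[x ^+ 3] = 2 by rewrite orderXgcd ox.
have oy2 : #[y ^+ 2] = 3 by rewrite orderXgcd oy.
have oy3 : #[y ^+ 3] = 2 by rewrite orderXgcd oy.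
have inv2x : forall c, c \in <[x]> -> #[c] = 2 -> c = x ^+ 3.
  by move=> c cx; case: (ord6 ox cx).
have inv2y : forall c, c \in <[y]> -> #[c] = 2 -> c = y ^+ 3.
  by move=> c cy; case: (ord6 oy cy).
have cb1 : forall h, h \in <[y]> -> commute (x ^+ 3) h.
  move=> h hy; apply/commgP/conjg_fixP.
  by apply: inv2x; rewrite ?orderJ // conjXg groupX // nx.
have cb2 : forall h, h \in <[x]> -> commute (y ^+ 3) h.
  move=> h hx; apply/commgP/conjg_fixP.
  by apply: inv2y; rewrite ?orderJ // conjXg groupX // ny.
have memx : forall n, x ^+ n \in <[x]> by move=> n; apply: mem_cycle.
have memy : forall n, y ^+ n \in <[y]> by move=> n; apply: mem_cycle.
have GX : forall n, x ^+ n \in G by move=> n; rewrite groupX.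
have GY : forall n, y ^+ n \in G by move=> n; rewrite groupX.
have cxx : forall m n, commute (x ^+ m) (x ^+ n) by move=> m n; apply: commuteX2.
have cyy : forall m n, commute (y ^+ m) (y ^+ n) by move=> m n; apply: commuteX2.
have neqx : forall i j, i < 6 -> j < 6 -> i != j -> x ^+ i <> x ^+ j.
  move=> i j ? ? nij /eqP; rewrite eq_expg_mod_order ox !modn_small //.
  by apply/negP.
have inv1 : forall n, (x ^+ n) ^+ 6 = 1.
  by move=> n; rewrite -expgM mulnC expgM x2 expg1n.
case: (eqVneq (x ^+ 3) (y ^+ 3)) => [b12 | b12].
-
  have ca : commute (x ^+ 2) (y ^+ 2).
    apply/commgP/conjg_fixP.
    have H : (x ^+ 2) ^ (y ^+ 2) \in <[x]> by rewrite conjXg groupX // nx.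
    have oJ : #[(x ^+ 2) ^ (y ^+ 2)] = 3 by rewrite orderJ.
    case: (ord6 ox H) => _ /(_ oJ) [//|E].
    exfalso.
    have E2 : (x ^+ 2) ^ (y ^+ 2 * y ^+ 2) = x ^+ 2.
      have x4 : x ^+ 4 = (x ^+ 2) ^+ 2 by rewrite -expgM.
      rewrite conjgM E x4 conjXg E x4 -!expgM.
      by rewrite -[LHS](expg_mod_order x) ox.
    have : (x ^+ 2) ^ (y ^+ 2 * y ^+ 2 * y ^+ 2) = x ^+ 4 by rewrite conjgM E2 E.
    rewrite -!expgD y2 conjg1.
    by apply: neqx.
  set c := x ^+ 2 * y ^+ 2.
  have Gc : c \in G by rewrite groupM.
  have nc : c != 1.
    apply/eqP => /eqP; rewrite mulg_eq1 => /eqP E.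
    apply: H12; apply: gen_in => //; last by rewrite -b12.
    by rewrite -[y ^+ 2]invgK -E groupV.
  have oc : #[c] = 3.
    apply: ordP => //; rewrite expgMn // -!expgM.
    by rewrite -(expg_mod_order x) -(expg_mod_order y) ox oy /= !expg0 mulg1.
  have ccb : commute c (x ^+ 3).
    apply/commute_sym; apply: commuteM; first exact: cxx.
    rewrite b12; exact: cyy.
  case: (mk c (x ^+ 3) Gc (GX 3) ccb oc ox3) => [[cx _] | [cy _]].
  + apply: H12; apply: gen_in => //; last by rewrite -b12.
    have -> : y ^+ 2 = (x ^+ 2)^-1 * c by rewrite mulKg.
    by rewrite groupM ?groupV.
  + apply: H12; apply/esym; apply: gen_in => //; last by rewrite b12.
    have -> : x ^+ 2 = c * (y ^+ 2)^-1 by rewrite mulgK.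
    by rewrite groupM ?groupV.
-
  have c1 : commute (x ^+ 2) (y ^+ 3) by apply/commute_sym/cb2.
  case: (mk _ _ (GX 2) (GY 3) c1 ox2 oy3) => [[_ yx] | [xy _]].
    by rewrite (inv2x _ yx oy3) eqxx in b12.
  set c := x ^+ 3 * y ^+ 3.
  have cx3y3 : commute (x ^+ 3) (y ^+ 3) by apply: cb1.
  have Gc : c \in G by rewrite groupM.
  have nc : c != 1.
    apply/eqP => /eqP; rewrite mulg_eq1 => /eqP E.
    have : y ^+ 3 \in <[x]> by rewrite -[y ^+ 3]invgK -E groupV.
    by move/inv2x => /(_ oy3) E'; rewrite E' eqxx in b12.
  have oc : #[c] = 2.
    apply: ordP => //; rewrite expgMn // -!expgM.
    by rewrite -(expg_mod_order x) -(expg_mod_order y) ox oy /= !expg0 mulg1.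
  have cac : commute (x ^+ 2) c by apply: commuteM.
  case: (mk _ _ (GX 2) Gc cac ox2 oc) => [[_ cx] | [_ cy]].
  + have : y ^+ 3 \in <[x]>.
      have -> : y ^+ 3 = (x ^+ 3)^-1 * c by rewrite mulKg.
      by rewrite groupM ?groupV.
    by move/inv2x => /(_ oy3) E'; rewrite E' eqxx in b12.
  + have : x ^+ 3 \in <[y]>.
      have -> : x ^+ 3 = c * (y ^+ 3)^-1 by rewrite mulgK.
      by rewrite groupM ?groupV.
    by move/inv2y => /(_ ox3) E'; rewrite E' eqxx in b12.
Qed.
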